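(* (i) Let $\Delta(\Phi_{23},\Phi_{13},\Phi_{12})$ and $\Delta(\Phi_1,\Phi_2,\Phi_3)$ be reciprocal triangles (in the sense of the context) with interior points $\Phi$ and $\Phi_{123}$ respectively, and let $a,b,c,a_1,b_2,c_3\in\mathbb{R}$ be the dilations defined by $$\Phi_{12}-\Phi=c(\Phi_1-\Phi_2),\quad \Phi_{23}-\Phi=a(\Phi_2-\Phi_3),\quad \Phi_{13}-\Phi=b(\Phi_3-\Phi_1),$$ $$\Phi_{123}-\Phi_3=c_3(\Phi_{13}-\Phi_{23}),\quad \Phi_{123}-\Phi_1=a_1(\Phi_{12}-\Phi_{13}),\quad \Phi_{123}-\Phi_2=b_2(\Phi_{23}-\Phi_{12}).$$ Then $$a_1=-\frac{a}{ab+bc+ca},\qquad b_2=-\frac{b}{ab+bc+ca},\qquad c_3=-\frac{c}{ab+bc+ca}.$$ (ii) Conversely, let $\Phi_1,\Phi_2,\Phi_3,\Phi$ be four generic points of $\mathbb{C}$, let $a,b,c\in\mathbb{R}$ be arbitrary non-vanishing real numbers and define $a_1,b_2,c_3$ by the three formulas above. Then the linear system consisting of the six equations above, in the unknowns $\Phi_{12},\Phi_{23},\Phi_{13},\Phi_{123}$, is compatible and its unique solution gives reciprocal triangles $\Delta(\Phi_{23},\Phi_{13},\Phi_{12})$ and $\Delta(\Phi_1,\Phi_2,\Phi_3)$ with interior points $\Phi$ and $\Phi_{123}$ respectively.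
   Context: The plane is identified with $\mathbb{C}$. Reciprocal triangles: let $\Delta(\Phi_{23},\Phi_{13},\Phi_{12})$ be a non-degenerate triangle and $\Phi$ an additional point; let $\Delta(\Phi_1,\Phi_2,\Phi_3)$ be a non-degenerate triangle whose edges $(\Phi_1,\Phi_2)$, $(\Phi_2,\Phi_3)$, $(\Phi_3,\Phi_1)$ are parallel to the segments $(\Phi,\Phi_{12})$, $(\Phi,\Phi_{23})$, $(\Phi,\Phi_{13})$ respectively. The two triangles are called reciprocal (with interior points $\Phi$ and $\Phi_{123}$) if there is a point $\Phi_{123}$ such that the segments $(\Phi_1,\Phi_{123})$, $(\Phi_2,\Phi_{123})$, $(\Phi_3,\Phi_{123})$ are parallel to the edges $(\Phi_{13},\Phi_{12})$, $(\Phi_{12},\Phi_{23})$, $(\Phi_{23},\Phi_{13})$ respectively. Parallelism of segments is expressed by real (dilation) factors as in the displayed equations. *)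

(* Defs.v *)
From HB Require Import structures.
From mathcomp Require Import all_boot all_order all_algebra.
From mathcomp Require Export complex.
Set Implicit Arguments. Unset Strict Implicit. Unset Printing Implicit Defensive.
Import Order.TTheory GRing.Theory Num.Theory.
Local Open Scope ring_scope.
Local Open Scope complex_scope.

(* Three points p q r of the plane are collinear iff the cross product of
   q - p and r - p vanishes, i.e. Im((q - p) * conj(r - p)) = 0. *)
Definition collinear (R : rcfType) (p q r : R[i]) : Prop :=
  Im ((q - p) * (r - p)^*) = 0.

Definition nondeg_triangle (R : rcfType) (p q r : R[i]) : Prop :=
  ~ collinear p q r.

Definition dilation_eqs (R : rcfType)
    (P1 P2 P3 P P12 P23 P13 P123 : R[i]) (a b c a1 b2 c3 : R) : Prop :=
  [/\ P12 - P = c%:C * (P1 - P2),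
      P23 - P = a%:C * (P2 - P3)
    & P13 - P = b%:C * (P3 - P1)] /\
  [/\ P123 - P3 = c3%:C * (P13 - P23),
      P123 - P1 = a1%:C * (P12 - P13)
    & P123 - P2 = b2%:C * (P23 - P12)].

Definition reciprocal (R : rcfType)
    (P23 P13 P12 P P1 P2 P3 P123 : R[i]) : Prop :=
  [/\ nondeg_triangle P23 P13 P12,
      nondeg_triangle P1 P2 P3 &
      (exists a b c a1 b2 c3 : R,
        dilation_eqs P1 P2 P3 P P12 P23 P13 P123 a b c a1 b2 c3)].

(* Main.v *)
Require Import Defs.
From HB Require Import structures.
From mathcomp Require Import all_boot all_order all_algebra.
From mathcomp Require Import complex ring.
Import Order.TTheory GRing.Theory Num.Theory.
Local Open Scope ring_scope.
Local Open Scope complex_scope.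
Definition cr {R : rcfType} (p q r : R[i]) : R := complex.Im ((q - p) * conjc (r - p)).
Lemma ndE {R : rcfType} (p q r : R[i]) : nondeg_triangle p q r <-> cr p q r != 0.
Proof.
rewrite /nondeg_triangle /collinear -complexIm /cr.
have -> : Num.conj (r - p) = conjc (r - p) by [].
split => H; first by apply/eqP => E; apply: H; rewrite E.
by move=> E; case: E => E; rewrite E eqxx in H.
Qed.
Lemma indep {R : rcfType} (v w : R[i]) (al be : R) : complex.Im (v * conjc w) != 0 -> al%:C * v + be%:C * w = 0 -> al = 0 /\ be = 0.
Proof.
case: v => x1 x2; case: w => y1 y2 /=; simpc => /= hD /eqP.
rewrite eq_complex /= => /andP [/eqP e1 /eqP e2].
have h1 : al * (- (x1 * y2) + x2 * y1) = y1 * (al * x2 + be * y2) - y2 * (al * x1 + be * y1) by ring.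
have h2 : be * (- (x1 * y2) + x2 * y1) = x2 * (al * x1 + be * y1) - x1 * (al * x2 + be * y2) by ring.
rewrite e1 e2 !mulr0 subrr in h1 h2.
move: h1 h2 => /eqP; rewrite mulf_eq0 (negbTE hD) orbF => /eqP ->.
by move/eqP; rewrite mulf_eq0 (negbTE hD) orbF => /eqP ->.
Qed.
Lemma ndS {R : rcfType} (P1 P2 P3 P : R[i]) a b c : cr (P + a%:C * (P2 - P3)) (P + b%:C * (P3 - P1)) (P + c%:C * (P1 - P2)) = (a*b+b*c+c*a) * cr P1 P2 P3.
Proof.
case: P1 => x1 y1; case: P2 => x2 y2; case: P3 => x3 y3; case: P => x y.
rewrite /cr /real_complex_def /=. simpc. rewrite /=. ring.
Qed.

Lemma crE {R : rcfType} (P1 P2 P3 : R[i]) : cr P1 P2 P3 = complex.Im ((P2 - P3) * conjc (P3 - P1)).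
Proof.
case: P1 => x1 y1; case: P2 => x2 y2; case: P3 => x3 y3.
rewrite /cr /=. simpc. rewrite /=. ring.
Qed.

Lemma idA {R : rcfType} (P1 P2 P3 P : R[i]) (a b c a1 c3 : R) :
  (P3 + c3%:C * ((P + b%:C * (P3 - P1)) - (P + a%:C * (P2 - P3))) - P1)
   - a1%:C * ((P + c%:C * (P1 - P2)) - (P + b%:C * (P3 - P1)))
  = (a1 * c - c3 * a)%:C * (P2 - P3) + (c3 * b + a1 * (b + c) + 1)%:C * (P3 - P1).
Proof. rewrite !(rmorphD, rmorphM, rmorphB, rmorph1) /=. ring. Qed.

Lemma idB {R : rcfType} (P1 P2 P3 P : R[i]) (a b c b2 c3 : R) :
  (P3 + c3%:C * ((P + b%:C * (P3 - P1)) - (P + a%:C * (P2 - P3))) - P2)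
   - b2%:C * ((P + a%:C * (P2 - P3)) - (P + c%:C * (P1 - P2)))
  = (- (c3 * a + b2 * (a + c) + 1))%:C * (P2 - P3) + (c3 * b - b2 * c)%:C * (P3 - P1).
Proof. rewrite !(rmorphD, rmorphM, rmorphB, rmorph1, rmorphN) /=. ring. Qed.

Lemma solve {R : rcfType} (P1 P2 P3 P P12 P23 P13 P123 : R[i]) (a b c a1 b2 c3 : R) :
  dilation_eqs P1 P2 P3 P P12 P23 P13 P123 a b c a1 b2 c3 ->
  [/\ P12 = P + c%:C * (P1 - P2), P23 = P + a%:C * (P2 - P3),
      P13 = P + b%:C * (P3 - P1) &
      [/\ P123 = P3 + c3%:C * ((P + b%:C * (P3 - P1)) - (P + a%:C * (P2 - P3))),
      (P3 + c3%:C * ((P + b%:C * (P3 - P1)) - (P + a%:C * (P2 - P3))) - P1)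
   - a1%:C * ((P + c%:C * (P1 - P2)) - (P + b%:C * (P3 - P1))) = 0 &
  (P3 + c3%:C * ((P + b%:C * (P3 - P1)) - (P + a%:C * (P2 - P3))) - P2)
   - b2%:C * ((P + a%:C * (P2 - P3)) - (P + c%:C * (P1 - P2))) = 0]].
Proof.
move=> [[h12 h23 h13] [hC hA hB]].
have e12 : P12 = P + c%:C * (P1 - P2) by rewrite -h12 addrC subrK.
have e23 : P23 = P + a%:C * (P2 - P3) by rewrite -h23 addrC subrK.
have e13 : P13 = P + b%:C * (P3 - P1) by rewrite -h13 addrC subrK.
have e123 : P123 = P3 + c3%:C * (P13 - P23) by rewrite -hC addrC subrK.
subst P12 P23 P13 P123.
split => //; split => //; apply/eqP; rewrite subr_eq0; apply/eqP; by [].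
Qed.

Lemma part1 {R : rcfType} (P1 P2 P3 P P12 P23 P13 P123 : R[i]) (a b c a1 b2 c3 : R) :
     reciprocal P23 P13 P12 P P1 P2 P3 P123 ->
     dilation_eqs P1 P2 P3 P P12 P23 P13 P123 a b c a1 b2 c3 ->
     [/\ a1 = - (a / (a * b + b * c + c * a)),
         b2 = - (b / (a * b + b * c + c * a))
       & c3 = - (c / (a * b + b * c + c * a))].
Proof.
move=> [_ nd _] /solve [_ _ _ [_ hA hB]].
move/ndE: nd; rewrite crE => nd.
rewrite idA in hA; rewrite idB in hB.
have [e1 e3] := indep _ _ _ _ nd hA.
have [e4 e2] := indep _ _ _ _ nd hB.
move/eqP: e4; rewrite oppr_eq0 => /eqP e4.
set S := a * b + b * c + c * a.
have hA1 : a1 * S = - a.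
  apply/eqP; rewrite -addr_eq0; apply/eqP.
  have -> : a1 * S + a = a * (c3 * b + a1 * (b + c) + 1) + b * (a1 * c - c3 * a) by rewrite /S; ring.
  by rewrite e1 e3 !mulr0 addr0.
have hB2 : b2 * S = - b.
  apply/eqP; rewrite -addr_eq0; apply/eqP.
  have -> : b2 * S + b = b * (c3 * a + b2 * (a + c) + 1) - a * (c3 * b - b2 * c) by rewrite /S; ring.
  by rewrite e4 e2 !mulr0 subr0.
have hC3 : c3 * S = - c.
  apply/eqP; rewrite -addr_eq0; apply/eqP.
  have -> : c3 * S + c = c * (c3 * b + a1 * (b + c) + 1) - (b + c) * (a1 * c - c3 * a) by rewrite /S; ring.
  by rewrite e1 e3 !mulr0 subr0.
have hS : S != 0.
  apply/eqP => S0.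
  move: hA1 hB2 hC3; rewrite S0 !mulr0 => /eqP; rewrite eq_sym oppr_eq0 => /eqP a0.
  move=> /eqP; rewrite eq_sym oppr_eq0 => /eqP b0.
  move=> /eqP; rewrite eq_sym oppr_eq0 => /eqP c0.
  move: e3; rewrite b0 c0 !mulr0 !add0r mulr0 add0r => /eqP; by rewrite oner_eq0.
by split; rewrite -mulNr -?hA1 -?hB2 -?hC3 mulfK.
Qed.
Theorem theorem1 (R : rcfType) :
  (* (i) *)
  (forall (P1 P2 P3 P P12 P23 P13 P123 : R[i]) (a b c a1 b2 c3 : R),
     reciprocal P23 P13 P12 P P1 P2 P3 P123 ->
     dilation_eqs P1 P2 P3 P P12 P23 P13 P123 a b c a1 b2 c3 ->
     [/\ a1 = - (a / (a * b + b * c + c * a)),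
         b2 = - (b / (a * b + b * c + c * a))
       & c3 = - (c / (a * b + b * c + c * a))])
  /\
  (* (ii) *)
  (forall (P1 P2 P3 P : R[i]) (a b c : R),
     nondeg_triangle P1 P2 P3 ->
     a != 0 -> b != 0 -> c != 0 ->
     a * b + b * c + c * a != 0 ->
     let S := a * b + b * c + c * a in
     let a1 := - (a / S) in
     let b2 := - (b / S) in
     let c3 := - (c / S) in
     exists X : R[i] * R[i] * R[i] * R[i],
       let: (P12, P23, P13, P123) := X in
       [/\ dilation_eqs P1 P2 P3 P P12 P23 P13 P123 a b c a1 b2 c3,
           reciprocal P23 P13 P12 P P1 P2 P3 P123
         & forall Q12 Q23 Q13 Q123 : R[i],
             dilation_eqs P1 P2 P3 P Q12 Q23 Q13 Q123 a b c a1 b2 c3 ->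
             (Q12, Q23, Q13, Q123) = X]).

Proof.
split; first exact: part1.
move=> P1 P2 P3 P a b c nd ha hb hc hS S a1 b2 c3.
exists (P + c%:C * (P1 - P2), P + a%:C * (P2 - P3), P + b%:C * (P3 - P1),
  P3 + c3%:C * ((P + b%:C * (P3 - P1)) - (P + a%:C * (P2 - P3)))).
have e1 : a1 * c - c3 * a = 0 by rewrite /a1 /c3 /S; field.
have e3 : c3 * b + a1 * (b + c) + 1 = 0 by rewrite /a1 /c3 /S; field.
have e4 : - (c3 * a + b2 * (a + c) + 1) = 0 by rewrite /b2 /c3 /S; field.
have e2 : c3 * b - b2 * c = 0 by rewrite /b2 /c3 /S; field.
have hD : dilation_eqs P1 P2 P3 P (P + c%:C * (P1 - P2)) (P + a%:C * (P2 - P3))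
   (P + b%:C * (P3 - P1))
   (P3 + c3%:C * ((P + b%:C * (P3 - P1)) - (P + a%:C * (P2 - P3)))) a b c a1 b2 c3.
  split; first by split; rewrite addrAC subrr add0r.
  split; first by rewrite addrAC subrr add0r.
    by apply/eqP; rewrite -subr_eq0 idA e1 e3 rmorph0 !mul0r addr0.
  by apply/eqP; rewrite -subr_eq0 idB e4 e2 rmorph0 !mul0r addr0.
split => //.
  split => //; last by exists a, b, c, a1, b2, c3.
  by apply/ndE; rewrite ndS mulf_neq0 //; apply/ndE.
move=> Q12 Q23 Q13 Q123 /solve [-> -> -> [-> _ _]] //.
Qed.
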